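(* Let $(\mathcal{A},\circ)$ be a Novikov algebra and $\alpha$ an algebra endomorphism of $(\mathcal{A},\circ)$. Define $x\circ_\alpha y=\alpha(x)\circ\alpha(y)$ and $[x,y]^-_\alpha=\alpha(x\circ y)-\alpha(y\circ x)$ for $x,y\in\mathcal{A}$. Then $(\mathcal{A},[\cdot,\cdot]^-_\alpha,\circ_\alpha,\alpha)$ is a Hom Gel'fand-Dorfman bialgebra.
   Context: All vector spaces are over $\mathbb{C}$. A Novikov algebra is a vector space $\mathcal{A}$ with a bilinear operation $\circ$ such that $(x\circ y)\circ z=(x\circ z)\circ y$ and $(x,y,z)=(y,x,z)$ for all $x,y,z$, where $(x,y,z)=(x\circ y)\circ z-x\circ(y\circ z)$. A Hom-Novikov algebra is a vector space with a bilinear operation $\circ$ and a linear endomorphism $\alpha$ such that $(x\circ y)\circ\alpha(z)-\alpha(x)\circ(y\circ z)=(y\circ x)\circ\alpha(z)-\alpha(y)\circ(x\circ z)$ and $(x\circ y)\circ\alpha(z)=(x\circ z)\circ\alpha(y)$ for all $x,y,z$. A Hom-Lie algebra is a vector space with a bilinear map $[\cdot,\cdot]$ and a linear map $\alpha$ with $[x,y]=-[y,x]$ and $[[x,y],\alpha(z)]+[[y,z],\alpha(x)]+[[z,x],\alpha(y)]=0$. A Hom Gel'fand-Dorfman bialgebra is a vector space $\mathcal{A}$ with a linear endomorphism $\alpha$ and two bilinear operations $[\cdot,\cdot],\circ$ such that $(\mathcal{A},[\cdot,\cdot],\alpha)$ is a Hom-Lie algebra, $(\mathcal{A},\circ,\alpha)$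 is a Hom-Novikov algebra, and $[x\circ y,\alpha(z)]-[x\circ z,\alpha(y)]+[x,y]\circ\alpha(z)-[x,z]\circ\alpha(y)-\alpha(x)\circ[y,z]=0$ for all $x,y,z$. *)

(* Defs.v *)
From HB Require Import structures.
From mathcomp Require Import all_boot all_order all_algebra.
From mathcomp Require Import complex.
From mathcomp Require Import Rstruct.
Set Implicit Arguments. Unset Strict Implicit. Unset Printing Implicit Defensive.
Import GRing.Theory.
Local Open Scope ring_scope.

Definition CC : Type := (Rdefinitions.R)[i].

Section Defs.
Variable K : nzRingType.
Variable V : lmodType K.

Definition bilinear_op (m : V -> V -> V) : Prop :=
  (forall y, linear (fun x => m x y)) /\ (forall x, linear (fun y => m x y)).

Definition assoc (m : V -> V -> V) x y z := m (m x y) z - m x (m y z).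

Definition is_novikov (m : V -> V -> V) : Prop :=
  bilinear_op m /\
  (forall x y z, m (m x y) z = m (m x z) y) /\
  (forall x y z, assoc m x y z = assoc m y x z).

Definition is_hom_novikov (m : V -> V -> V) (a : V -> V) : Prop :=
  bilinear_op m /\ linear a /\
  (forall x y z, m (m x y) (a z) - m (a x) (m y z)
                 = m (m y x) (a z) - m (a y) (m x z)) /\
  (forall x y z, m (m x y) (a z) = m (m x z) (a y)).

Definition is_hom_lie (b : V -> V -> V) (a : V -> V) : Prop :=
  bilinear_op b /\ linear a /\
  (forall x y, b x y = - b y x) /\
  (forall x y z, b (b x y) (a z) + b (b y z) (a x) + b (b z x) (a y) = 0).

Definition is_hom_GD_bialgebra (b m : V -> V -> V) (a : V -> V) : Prop :=
  is_hom_lie b a /\ is_hom_novikov m a /\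
  (forall x y z, b (m x y) (a z) - b (m x z) (a y) + m (b x y) (a z)
                 - m (b x z) (a y) - m (a x) (b y z) = 0).

Definition is_endomorphism (m : V -> V -> V) (a : V -> V) : Prop :=
  linear a /\ forall x y, a (m x y) = m (a x) (a y).

Definition twist_mul (m : V -> V -> V) (a : V -> V) x y := m (a x) (a y).
Definition twist_minus_bracket (m : V -> V -> V) (a : V -> V) x y :=
  a (m x y) - a (m y x).
End Defs.

(* Main.v *)
Require Import Defs.
From mathcomp Require Import all_boot all_order all_algebra.
From mathcomp Require Import complex Rstruct.
Import GRing.Theory.
Local Open Scope ring_scope.
Set Implicit Arguments. Unset Strict Implicit.

Section Reflect.
Variable M : zmodType.

Inductive ex := At of nat | Add of ex & ex | Opp of ex | Zero.

Fixpoint eval (ts : seq M) (e : ex) : M :=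
  match e with
  | At n => nth 0 ts n
  | Add e1 e2 => eval ts e1 + eval ts e2
  | Opp e1 => - eval ts e1
  | Zero => 0
  end.

Fixpoint addl (l1 l2 : seq int) : seq int :=
  match l1, l2 with
  | [::], _ => l2
  | _, [::] => l1
  | a :: l1', b :: l2' => (a + b) :: addl l1' l2'
  end.

Fixpoint norm (e : ex) : seq int :=
  match e with
  | At n => rcons (nseq n 0) 1
  | Add e1 e2 => addl (norm e1) (norm e2)
  | Opp e1 => map (fun c => - c) (norm e1)
  | Zero => [::]
  end.

Fixpoint evl (ts : seq M) (l : seq int) : M :=
  match l with
  | [::] => 0
  | c :: l' => (nth 0 ts 0) *~ c + evl (behead ts) l'
  end.

Lemma evl_add ts l1 l2 : evl ts (addl l1 l2) = evl ts l1 + evl ts l2.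
Proof.
elim: l1 l2 ts => [|a l1 IH] [|b l2] ts /=; rewrite ?add0r ?addr0 //.
rewrite IH mulrzDr.
rewrite -!addrA; congr (_ + _); rewrite !addrA; congr (_ + _); exact: addrC.
Qed.

Lemma evl_opp ts l : evl ts (map (fun c => - c) l) = - evl ts l.
Proof. elim: l ts => [|a l IH] ts /=; rewrite ?oppr0 // IH mulrNz opprD //. Qed.

Lemma evl_at ts n : evl ts (rcons (nseq n 0) 1) = nth 0 ts n.
Proof.
elim: n ts => [|n IH] ts /=; first by rewrite mulr1z addr0; case: ts.
by rewrite mulr0z add0r IH; case: ts => [|t ts] //=; rewrite !nth_nil.
Qed.

Lemma evl0 ts l : all (fun c => c == 0) l -> evl ts l = 0.
Proof.
elim: l ts => [|a l IH] ts //= /andP [/eqP -> H].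
by rewrite mulr0z add0r IH.
Qed.

Lemma eval_norm ts e : eval ts e = evl ts (norm e).
Proof.
elim: e => [n|e1 IH1 e2 IH2|e1 IH|] /=.
- by rewrite evl_at.
- by rewrite evl_add IH1 IH2.
- by rewrite evl_opp IH.
- by [].
Qed.

Lemma reflect_zero ts e : all (fun c => c == 0) (norm e) -> eval ts e = 0.
Proof. by move=> H; rewrite eval_norm evl0. Qed.

End Reflect.

Ltac lindex x ts :=
  match ts with
  | ?y :: ?ts' =>
    match constr:(Set) with
    | _ => let _ := constr:(@erefl _ x : x = y) in constr:(0%N)
    | _ => let n := lindex x ts' in constr:(n.+1)
    end
  end.

Ltac inlist x ts :=
  match ts with
  | x :: _ => idtac
  | _ :: ?ts' => inlist x ts'
  end.

Ltac collect t ts :=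
  match t with
  | ?a + ?b => let ts1 := collect a ts in collect b ts1
  | - ?a => collect a ts
  | 0 => ts
  | ?x => match ts with
          | _ => let _ := lindex x ts in ts
          | _ => constr:(x :: ts)
          end
  end.

Ltac reify t ts :=
  match t with
  | ?a + ?b => let ea := reify a ts in let eb := reify b ts in constr:(Add ea eb)
  | - ?a => let ea := reify a ts in constr:(Opp ea)
  | 0 => constr:(Zero)
  | ?x => let n := lindex x ts in constr:(At n)
  end.

Ltac zmod_zero :=
  match goal with
  | |- ?t = 0 =>
    let T := type of t in
    let ts0 := collect t (@nil T) in
    let ts := eval simpl in ts0 in
    let e := reify t ts in
    change (@eval _ ts e = 0); apply: reflect_zero; by vm_compute
  end.

Ltac zmod_eq := apply/eqP; rewrite -subr_eq0; apply/eqP; zmod_zero.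


Section Lin.
Variable V : lmodType CC.

Lemma linD (f : V -> V) : linear f -> forall u v, f (u + v) = f u + f v.
Proof. by move=> H u v; have := H 1 u v; rewrite !scale1r. Qed.

Lemma lin0 (f : V -> V) : linear f -> f 0 = 0.
Proof.
move=> H; have E := linD H 0 0; rewrite addr0 in E.
by apply: (@addrI _ (f 0)); rewrite addr0 -E.
Qed.

Lemma linN (f : V -> V) : linear f -> forall u, f (- u) = - f u.
Proof.
move=> H u; have := H (-1) u 0; rewrite !addr0 lin0 // addr0.
by rewrite !scaleNr !scale1r.
Qed.

Lemma linB (f : V -> V) : linear f -> forall u v, f (u - v) = f u - f v.
Proof. by move=> H u v; rewrite linD // linN. Qed.

Lemma linZ (f : V -> V) : linear f -> forall c u, f (c *: u) = c *: f u.
Proof. by move=> H c u; have := H c u 0; rewrite !addr0 lin0 // addr0. Qed.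
End Lin.

Lemma zero_by (M : zmodType) (x e : M) : e = 0 -> x - e = 0 -> x = 0.
Proof. by move=> -> ; rewrite subr0. Qed.

Theorem corollary3p4 (V : lmodType CC) (m : V -> V -> V) (a : V -> V) :
  is_novikov m -> is_endomorphism m a ->
  is_hom_GD_bialgebra (twist_minus_bracket m a) (twist_mul m a) a.
Proof.
move=> [[Hl Hr] [Hrc Hls]] [Ha Hend].
have mDl u v w : m (u + v) w = m u w + m v w by exact: (linD (Hl w)).
have mDr u v w : m w (u + v) = m w u + m w v by exact: (linD (Hr w)).
have mNl u w : m (- u) w = - m u w by exact: (linN (Hl w)).
have mNr u w : m w (- u) = - m w u by exact: (linN (Hr w)).
have mZl c u w : m (c *: u) w = c *: m u w by exact: (linZ (Hl w)).
have mZr c u w : m w (c *: u) = c *: m w u by exact: (linZ (Hr w)).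
have aD := linD Ha; have aN := linN Ha; have aZ := linZ Ha.
rewrite /is_hom_GD_bialgebra /is_hom_lie /is_hom_novikov /twist_minus_bracket
  /twist_mul /bilinear_op.
split; [|split].
- split; [split|split; [exact: Ha|split]].
  + move=> y c u v /=.
    rewrite ?mDl ?mNl ?mDr ?mNr ?mZl ?mZr ?aD ?aN ?aZ scalerBr; zmod_eq.
  + move=> y c u v /=.
    rewrite ?mDl ?mNl ?mDr ?mNr ?mZl ?mZr ?aD ?aN ?aZ scalerBr; zmod_eq.
  + move=> x y; zmod_eq.
  + move=> x y z.
    rewrite !Hend !aD !aN !Hend !mDl !mNl !mDr !mNr.
    set P := a (a x); set Q := a (a y); set R := a (a z).
    have E1 : assoc m P Q R - assoc m Q P R = 0 by rewrite Hls subrr.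
    have E2 : assoc m Q R P - assoc m R Q P = 0 by rewrite Hls subrr.
    have E3 : assoc m R P Q - assoc m P R Q = 0 by rewrite Hls subrr.
    apply: (zero_by (e := (assoc m P Q R - assoc m Q P R) + (assoc m Q R P - assoc m R Q P) + (assoc m R P Q - assoc m P R Q))).
      by rewrite E1 E2 E3 !addr0.
    rewrite /assoc; zmod_zero.
- split; [split|split; [exact: Ha|split]].
  + move=> y c u v /=. rewrite aD aZ mDl mZl //.
  + move=> x c u v /=. rewrite aD aZ mDr mZr //.
  + move=> x y z; rewrite !Hend; exact: Hls.
  + move=> x y z; rewrite !Hend; exact: Hrc.
- move=> x y z.
  rewrite !Hend ?aD ?aN !Hend ?mDl ?mNl ?mDr ?mNr ?Hend.
  set P := a (a x); set Q := a (a y); set R := a (a z).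
  have E1 : m (m P Q) R - m (m P R) Q = 0 by rewrite Hrc subrr.
  have E2 : assoc m Q P R - assoc m P Q R = 0 by rewrite Hls subrr.
  have E3 : assoc m R P Q - assoc m P R Q = 0 by rewrite Hls subrr.
  apply: (zero_by (e := (m (m P Q) R - m (m P R) Q) - (assoc m Q P R - assoc m P Q R) + (assoc m R P Q - assoc m P R Q))).
    by rewrite E1 E2 E3 !subr0 addr0.
  rewrite /assoc; zmod_zero.
Qed.
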